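(* For any finite-rank $S,T\in\mathfrak S_1(\mathbb T)$, $$d(S,T)=\rho_1(f_S,f_T).$$
   Context: Rigged sets: each point has a multiplicity in $\{0,1,\dots,\infty\}$; an enumeration lists each point according to its multiplicity. $\mathfrak S_1(\mathbb T)$ is the set of countable rigged subsets of the unit circle $\mathbb T$ (identified with $[0,2\pi)$, arc-length metric) in which $1$ has infinite multiplicity, with no other accumulation point and with $d(S,\mathbf 1)<\infty$, where $d(S,T)=\inf\sum_j\mathrm{dist}(s_j,t_j)$ over enumerations $(s_j),(t_j)$ of $S,T$ and $\mathbf 1$ is $1$ with infinite multiplicity. $S$ has finite rank if it has finitely many points other than $1$ counting multiplicity. For such $S$, $f_S$ is the class, modulo addition of integer constants, of the function $(0,2\pi)\ni\theta\mapsto\#\{s\in S\setminus\{1\}:\theta<\arg s\}$ (counting multiplicity, $\arg s\in(0,2\pi)$). For two such classes $f,g$, $\rho_1(f,g)=\inf\int_0^{2\pi}|\tilde f(\theta)-\tilde g(\theta)|\,d\theta$ over all representatives $\tilde f$ of $f$ and $\tilde g$ of $g$. *)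

(* Defs.v *)
(* R : realType. The circle T is identified with
   angles in [0, 2pi), the point 1 corresponding to the angle 0. *)
From mathcomp Require Import all_boot all_order all_algebra.
From mathcomp Require Import all_classical all_reals all_analysis.
Set Implicit Arguments. Unset Strict Implicit. Unset Printing Implicit Defensive.
Import Order.TTheory GRing.Theory Num.Theory.
Local Open Scope classical_set_scope.
Local Open Scope ring_scope.

Section Defs.
Variable R : realType.

Definition circ_dist (a b : R) : R := Num.min `|a - b| (2 * pi - `|a - b|).

(* A finite-rank element of S_1(T) is encoded by the finite multiset of its
   points other than 1 (given by their arguments in (0, 2pi)), as a list;
   the point 1 (angle 0) implicitly carries infinite multiplicity. *)
Definition finrank_rigged (S : seq R) : Prop :=
  forall a, a \in S -> 0 < a < 2 * pi.

Definition enumeration (S : seq R) (s : nat -> R) : Prop :=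
  (forall j, 0 <= s j < 2 * pi) /\
  infinite_set [set j | s j = 0] /\
  (forall x, x != 0 -> ([set j | s j = x] #= `I_(count_mem x S))%card).

Definition rigged_dist (S T : seq R) : \bar R :=
  ereal_inf [set e | exists (s t : nat -> R), [/\ enumeration S s,
      enumeration T t & e = (\sum_(0 <= j <oo) (circ_dist (s j) (t j))%:E)%E]].

(* a representative of f_S : theta |-> #{s in S\{1} : theta < arg s} *)
Definition fS (S : seq R) (theta : R) : R := (count (fun a => theta < a) S)%:R.

(* rho_1(f_S, f_T): inf over representatives (shifts by integer constants) *)
Definition rho1 (S T : seq R) : \bar R :=
  ereal_inf [set e | exists (m n : int),
     e = (\int[lebesgue_measure]_(x in `]0%R, (2 * pi)%R[)
                    (`|(fS S x + m%:~R) - (fS T x + n%:~R)|)%:E)%E].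

End Defs.

(* Main.v *)
Require Import Defs.
From mathcomp Require Import all_boot all_order all_algebra.
From mathcomp Require Import all_classical all_reals all_analysis.
From mathcomp Require Import ring lra measurable_realfun.
From mathcomp Require finmap.
Set Implicit Arguments. Unset Strict Implicit. Unset Printing Implicit Defensive.
Import Order.TTheory GRing.Theory Num.Theory.
Local Open Scope classical_set_scope.
Local Open Scope ring_scope.

Module CB.
Import finmap.
Lemma card_bounded (P : pred nat) N : (forall j, P j -> (j < N)%N) ->
  ([set j | P j] #= `I_(count P (iota 0 N)))%card.
Proof.
move=> HP.
have hj : forall j, (j \in seq_fset tt [seq j <- iota 0 N | P j]) = P j.
  move=> j; rewrite seq_fsetE mem_filter mem_iota add0n.
  by case Pj: (P j) => //=; rewrite HP.
have -> : [set j | P j] = [set` seq_fset tt [seq j <- iota 0 N | P j]].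
  apply/funext => j; apply/propext.
  change (P j <-> j \in seq_fset tt [seq j <- iota 0 N | P j]).
  by rewrite hj.
apply/card_eq_fsetP.
by rewrite size_seq_fset undup_id ?size_filter // filter_uniq // iota_uniq.
Qed.

Lemma fin_bound (A : set nat) : finite_set A -> exists N, forall j, A j -> (j < N)%N.
Proof.
move=> fA; exists (\max_(j <- fset_set A) j).+1 => j Aj; rewrite ltnS.
apply: (@leq_bigmax_seq _ _ xpredT (fun j => j) j) => //.
by rewrite in_fset_set // mem_set.
Qed.


End CB.
Import CB.

Ltac simpl_arc := rewrite /= ?mulr1n ?mulr0n ?subrr ?subr0 ?sub0r ?add0r ?addr0 ?addNr ?normrN ?normr1 ?normr0 ?addr0 ?add0r.

Section Aux.
Variable R : realType.
Local Notation D := (`]0%R, (2 * pi)%R[%classic : set R).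
Local Notation leb := (@lebesgue_measure R).
Implicit Types (a b s : seq R) (t x y u v c : R) (k : int).

Definition seg (u v x : R) : R := ((u <= x) && (x < v))%:R.

Lemma seg_indic u v : seg u v = \1_(`[u, v[ : set R).
Proof. apply/funext => x; rewrite indicE /seg. by rewrite mem_setE in_itv. Qed.

Lemma mD : measurable D. Proof. exact: measurable_itv. Qed.

Lemma meas_seg u v (A : set R) : measurable_fun A (seg u v).
Proof. rewrite seg_indic; apply: measurable_indic; exact: measurable_itv. Qed.

Lemma leb_itv_eq (a b : R) (x y : bool) : a <= b ->
  leb [set` Interval (BSide x a) (BSide y b)] = (b - a)%:E.
Proof.
move=> ab; rewrite lebesgue_measure_itv /= lte_fin.
by case: ltgtP ab => //= -> _; rewrite subrr.
Qed.

Lemma int_seg u v : 0 <= u -> u <= v -> v <= 2 * pi ->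
  (\int[leb]_(x in D) (seg u v x)%:E = (v - u)%:E)%E.
Proof.
move=> u0 uv v2.
have mI : measurable (`[u, v[%classic `&` D).
  by apply: measurableI; exact: measurable_itv.
have s1 : (`[u, v[%classic `&` D) `<=` `[u, v[%classic by move=> x [].
have s2 : (`]u, v[%classic : set R) `<=` (`[u, v[%classic `&` D).
  move=> x /=; rewrite !in_itv /= => /andP[ux xv]; split.
    by rewrite (ltW ux) xv.
  apply/andP; split; lra.
have h1 := @le_measure _ _ _ leb (`[u, v[%classic `&` D) (`[u, v[%classic).
have h2 := @le_measure _ _ _ leb (`]u, v[%classic) (`[u, v[%classic `&` D).
rewrite seg_indic integral_indic; [|exact: mD|exact: measurable_itv].
apply/eqP; rewrite eq_le; apply/andP; split.
  rewrite -(leb_itv_eq true true uv).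
  by apply: h1; rewrite ?inE //; exact: measurable_itv.
rewrite -(leb_itv_eq false true uv).
by apply: h2; rewrite ?inE //; exact: measurable_itv.
Qed.

Lemma int_add_seg (h : R -> R) u v : measurable_fun D h ->
  (forall x, D x -> 0 <= h x) -> 0 <= u -> u <= v -> v <= 2 * pi ->
  (\int[leb]_(x in D) (h x + seg u v x)%:E =
   \int[leb]_(x in D) (h x)%:E + (v - u)%:E)%E.
Proof.
move=> mh h0 u0 uv v2.
rewrite -int_seg //.
under eq_integral do rewrite EFinD.
apply: ge0_integralD; first exact: mD.
- by move=> x Dx; rewrite lee_fin h0.
- by apply/measurable_EFinP.
- by move=> x _; rewrite lee_fin /seg ler0n.
- by apply/measurable_EFinP; exact: meas_seg.
Qed.

Lemma meas_lt (a : R) (A : set R) : measurable_fun A (fun x : R => (x < a)%R%:R : R).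
Proof.
have -> : (fun x : R => (x < a)%R%:R : R) = \1_(`]-oo, a[ : set R).
  by apply/funext => x; rewrite indicE mem_setE in_itv.
apply: measurable_indic; exact: measurable_itv.
Qed.

Lemma fS_cons (c : R) (s : seq R) (x : R) : fS (c :: s) x = (x < c)%R%:R + fS s x.
Proof. by rewrite /fS /= natrD. Qed.

Lemma meas_fS (s : seq R) (A : set R) : measurable_fun A (fS s).
Proof.
elim: s => [|c s IH].
  by rewrite /fS /=; exact: measurable_cst.
have -> : fS (c :: s) = (fun x => (x < c)%R%:R + fS s x).
  by apply/funext => x; rewrite fS_cons.
by apply: measurable_funD => //; exact: meas_lt.
Qed.

Definition G (a b : seq R) (k : int) x := `|fS a x - fS b x + k%:~R|.

Lemma meas_G a b k (A : set R) : measurable A -> measurable_fun A (G a b k).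
Proof.
move=> mA.
have -> : G a b k = (@Num.norm _ R) \o (fun x => fS a x - fS b x + k%:~R) by [].
apply: measurableT_comp; first exact: normr_measurable.
apply: measurable_funD; last exact: measurable_cst.
by apply: measurable_funB; exact: meas_fS.
Qed.


Lemma arc1 (x y t : R) : 0 < t -> x <= y ->
  `|(t < x)%R%:R - (t < y)%R%:R| = seg x y t.
Proof.
move=> t0 xy; rewrite /seg.
case: (ltP t x) => hx; case: (ltP t y) => hy; simpl_arc; simpl_arc; lra.
Qed.

Lemma arc2 (x y t : R) : 0 < t -> t < 2 * pi -> x <= y ->
  `|(t < x)%R%:R - (t < y)%R%:R + 1| = seg 0 x t + seg y (2 * pi) t.
Proof.
move=> t0 t2 xy; rewrite /seg (ltW t0) t2 /=.
case: (ltP t x) => hx; case: (ltP t y) => hy; simpl_arc; simpl_arc; try lra.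
Qed.

Lemma arc1' (x y t : R) : 0 < t -> y <= x ->
  `|(t < x)%R%:R - (t < y)%R%:R| = seg y x t.
Proof. by move=> t0 yx; rewrite distrC arc1. Qed.

Lemma arc2' (x y t : R) : 0 < t -> t < 2 * pi -> y <= x ->
  `|(t < x)%R%:R - (t < y)%R%:R - 1| = seg 0 y t + seg x (2 * pi) t.
Proof.
move=> t0 t2 yx; rewrite -normrN -arc2 //; congr `|_|; ring.
Qed.

Definition I (a b : seq R) (k : int) :=
  (\int[leb]_(x in D) (G a b k x)%:E)%E.

Definition cost (a b : seq R) :=
  \sum_(0 <= j < size a) circ_dist (nth 0 a j) (nth 0 b j).

Lemma cost_cons x a y b : cost (x :: a) (y :: b) = circ_dist x y + cost a b.
Proof. by rewrite /cost /= big_nat_recl. Qed.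

Lemma cost_nil : cost [::] [::] = 0.
Proof. by rewrite /cost big_geq. Qed.

Lemma G_cons x a y b k t : G (x :: a) (y :: b) k t =
  `|(fS a t - fS b t + k%:~R) + ((t < x)%R%:R - (t < y)%R%:R)|.
Proof. by rewrite /G !fS_cons; congr `|_|; ring. Qed.

Lemma I_le a b k a1 b1 k1 u1 v1 u2 v2 :
  (forall t, D t -> G a b k t <= G a1 b1 k1 t + seg u1 v1 t + seg u2 v2 t) ->
  0 <= u1 -> u1 <= v1 -> v1 <= 2 * pi ->
  0 <= u2 -> u2 <= v2 -> v2 <= 2 * pi ->
  (I a b k <= I a1 b1 k1 + (v1 - u1)%:E + (v2 - u2)%:E)%E.
Proof.
move=> H u10 u1v1 v12 u20 u2v2 v22.
have G0 : forall t, 0 <= G a1 b1 k1 t by move=> t; exact: normr_ge0.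
rewrite /I -int_add_seg //; last exact: meas_G.
rewrite -(@int_add_seg (fun x => G a1 b1 k1 x + seg u1 v1 x)) //; last first.
  by move=> x _; rewrite addr_ge0 // /seg ler0n.
  by apply: measurable_funD; [exact: meas_G | exact: meas_seg].
apply: (@ge0_le_integral _ _ _ leb); first exact: mD.
- by move=> x _; rewrite lee_fin normr_ge0.
- by apply/measurable_EFinP; exact: meas_G.
- apply/measurable_EFinP; apply: measurable_funD; last exact: meas_seg.
  by apply: measurable_funD; [exact: meas_G | exact: meas_seg].
- by move=> x Dx; rewrite lee_fin H.
Qed.


Lemma fin_step (i : \bar R) (c' e1 e2 c : R) : (i <= c'%:E)%E -> e1 + e2 = c ->
  (i + e1%:E + e2%:E <= (c + c')%:E)%E.
Proof.
move=> ic <-; rewrite -addeA -EFinD [X in (_ <= X)%E]EFinD addeC.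
by apply: leeD.
Qed.

Lemma I_nil : I [::] [::] 0 = 0%E.
Proof.
rewrite /I; under eq_integral do rewrite /G /fS /= subrr addr0 normr0.
exact: integral0.
Qed.

Lemma seg00 t : seg 0 0 t = 0.
Proof. by rewrite /seg; case: (leP 0 t) => //= ?; rewrite ltNge ltW. Qed.

Lemma dir1 (a b : seq R) : size a = size b ->
  (forall c, c \in a -> 0 <= c < 2 * pi) ->
  (forall c, c \in b -> 0 <= c < 2 * pi) ->
  exists k : int, (I a b k <= (cost a b)%:E)%E.
Proof.
elim: a b => [|x a IH] [|y b] //=.
  by move=> _ _ _; exists 0; rewrite I_nil cost_nil.
move=> [sz] Ha Hb.
have [k1 Hk1] := IH b sz (fun c hc => Ha c (mem_behead (s := x :: a) hc))
                       (fun c hc => Hb c (mem_behead (s := y :: b) hc)).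
have /andP[x0 x2] := Ha x (mem_head _ _).
have /andP[y0 y2] := Hb y (mem_head _ _).
rewrite cost_cons.
case: (leP x y) => xy.
  have nd : `|x - y| = y - x by rewrite distrC ger0_norm // subr_ge0.
  case: (leP (y - x) (2 * pi - (y - x))) => dd.
    exists k1; apply: le_trans (fin_step (e1 := y - x) (e2 := 0 - 0) Hk1 _);
      last by rewrite /circ_dist nd min_l // subrr addr0.
    apply: I_le; [|lra..].
    move=> t; rewrite /= in_itv /= => /andP[t0 t2].
    rewrite G_cons seg00 addr0 -arc1 //; exact: ler_normD.
  exists (k1 + 1); apply: le_trans (fin_step (e1 := x - 0) (e2 := 2 * pi - y) Hk1 _);
    last by rewrite /circ_dist nd min_r ?(ltW dd) //; ring.
  apply: I_le; [|lra..].
  move=> t; rewrite /= in_itv /= => /andP[t0 t2].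
  rewrite -addrA -arc2 // G_cons intrD.
  apply: le_trans (ler_normD _ _); rewrite le_eqVlt; apply/orP; left; apply/eqP.
  congr `|_|; ring.
have xy' := ltW xy.
have nd : `|x - y| = x - y by rewrite ger0_norm // subr_ge0.
case: (leP (x - y) (2 * pi - (x - y))) => dd.
  exists k1; apply: le_trans (fin_step (e1 := x - y) (e2 := 0 - 0) Hk1 _);
    last by rewrite /circ_dist nd min_l // subrr addr0.
  apply: I_le; [|lra..].
  move=> t; rewrite /= in_itv /= => /andP[t0 t2].
  rewrite G_cons seg00 addr0 -arc1' //; exact: ler_normD.
exists (k1 - 1); apply: le_trans (fin_step (e1 := y - 0) (e2 := 2 * pi - x) Hk1 _);
  last by rewrite /circ_dist nd min_r ?(ltW dd) //; ring.
apply: I_le; [|lra..].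
move=> t; rewrite /= in_itv /= => /andP[t0 t2].
rewrite -addrA -arc2' // G_cons intrB.
apply: le_trans (ler_normD _ _); rewrite le_eqVlt; apply/orP; left; apply/eqP.
congr `|_|; ring.
Qed.


Lemma fS_nil t : fS [::] t = 0.
Proof. by rewrite /fS. Qed.

Lemma fS_ge0 s t : 0 <= fS s t.
Proof. exact: ler0n. Qed.

Lemma fS_perm s1 s2 t : perm_eq s1 s2 -> fS s1 t = fS s2 t.
Proof. by move=> /permP h; rewrite /fS h. Qed.

Lemma fS_zero s t : (forall c, c \in s -> c <= t) -> fS s t = 0.
Proof.
elim: s => [|c s IH] H; first by rewrite fS_nil.
rewrite fS_cons IH; last by move=> d hd; apply: H; rewrite inE hd orbT.
by rewrite ltNge H ?mem_head //= mulr0n addr0.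
Qed.

Lemma max_in (s : seq R) : s != [::] ->
  exists2 y, y \in s & forall c, c \in s -> c <= y.
Proof.
elim: s => [|c s IH] // _.
case: (eqVneq s [::]) => [->|sn].
  by exists c; rewrite ?mem_head // => d; rewrite inE => /eqP ->.
have [y ys Hy] := IH sn.
case: (leP c y) => cy.
  exists y; first by rewrite inE ys orbT.
  by move=> d; rewrite inE => /orP[/eqP ->|/Hy].
exists c; first exact: mem_head.
move=> d; rewrite inE => /orP[/eqP ->//|/Hy dy].
by apply: le_trans dy (ltW cy).
Qed.

Lemma G_sym a b k t : G b a (- k) t = G a b k t.
Proof. by rewrite /G -normrN intrN; congr `|_|; ring. Qed.

Lemma I_sym a b k : I b a (- k) = I a b k.
Proof. by rewrite /I; apply: eq_integral => t _; rewrite G_sym. Qed.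

Lemma circ_sym x y : circ_dist x y = circ_dist y x.
Proof. by rewrite /circ_dist distrC. Qed.

Lemma cost_sym a b : size a = size b -> cost b a = cost a b.
Proof.
by move=> sz; rewrite /cost sz; apply: eq_bigr => j _; rewrite circ_sym.
Qed.

Lemma I_eq a b k a1 b1 k1 u v :
  (forall t, D t -> G a b k t = G a1 b1 k1 t + seg u v t) ->
  0 <= u -> u <= v -> v <= 2 * pi ->
  I a b k = (I a1 b1 k1 + (v - u)%:E)%E.
Proof.
move=> H u0 uv v2; rewrite /I -int_add_seg //; last 2 first.
- exact: meas_G.
- by move=> t _; exact: normr_ge0.
by apply: eq_integral => t; rewrite inE => Dt; rewrite H.
Qed.

Definition matches (a' s : seq R) := perm_eq [seq c <- a' | c != 0] s.

Definition Mres (a b : seq R) (k : int) := exists a' b', [/\ size a' = size b',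
  matches a' a, matches b' b & ((cost a' b')%:E <= I a b k)%E].

Lemma step2 a b k x y a1 b1 k1 u v :
  perm_eq a ([seq c <- [:: x] | c != 0] ++ a1) ->
  perm_eq b ([seq c <- [:: y] | c != 0] ++ b1) ->
  (forall t, D t -> G a b k t = G a1 b1 k1 t + seg u v t) ->
  0 <= u -> u <= v -> v <= 2 * pi -> circ_dist x y <= v - u ->
  Mres a1 b1 k1 -> Mres a b k.
Proof.
move=> pa pb H u0 uv v2 cd [a1' [b1' [sz ma mb c1]]].
exists (x :: a1'), (y :: b1'); split.
- by rewrite /= sz.
- rewrite perm_sym in pa; apply: perm_trans pa.
  by rewrite -[x :: a1']/([:: x] ++ a1') filter_cat perm_cat2l.
- rewrite perm_sym in pb; apply: perm_trans pb.
  by rewrite -[y :: b1']/([:: y] ++ b1') filter_cat perm_cat2l.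
rewrite cost_cons (I_eq H) // EFinD addeC.
by apply: leeD => //; rewrite lee_fin.
Qed.

Lemma Mres_nil k : Mres [::] [::] k.
Proof.
exists [::], [::]; split => //.
rewrite cost_nil; apply: integral_ge0 => t _; exact: normr_ge0.
Qed.

Lemma Mres_sym a b k : Mres b a (- k) -> Mres a b k.
Proof.
move=> [b' [a' [sz mb ma c]]]; exists a', b'; split => //.
by rewrite -I_sym -cost_sym.
Qed.


Lemma intr1' : ((1 : int)%:~R : R) = 1.
Proof. exact: mulr1n. Qed.

Lemma P1 x (a1 : seq R) k t : 0 < t -> (0 <= k)%R ->
  G (x :: a1) [::] k t = G a1 [::] k t + seg 0 x t.
Proof.
move=> t0 k0; rewrite /G fS_cons fS_nil /seg (ltW t0) /=.
have A0 := fS_ge0 a1 t; have K0 : 0 <= k%:~R :> R by rewrite ler0z.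
case: (ltP t x) => _; simpl_arc; rewrite !ger0_norm; lra.
Qed.

Lemma P2 a y (b1 : seq R) k t : 0 < t -> t < 2 * pi -> (0 < k)%R ->
  (forall c, c \in b1 -> c <= y) ->
  G a (y :: b1) k t = G a b1 (k - 1) t + seg y (2 * pi) t.
Proof.
move=> t0 t2 k0 Hb; rewrite /G fS_cons /seg t2 intrB /=.
have A0 := fS_ge0 a t; have K0 : 1 <= k%:~R :> R by rewrite ler1z.
case: (ltP t y) => ty; simpl_arc.
  by congr `|_|; rewrite intr1'; ring.
rewrite intr1' (fS_zero (s := b1) (t := t)); last by move=> c /Hb cy; exact: le_trans cy ty.
rewrite !ger0_norm; lra.
Qed.

Lemma P3 y (b1 : seq R) t : 0 < t ->
  G [::] (y :: b1) 0 t = G [::] b1 0 t + seg 0 y t.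
Proof.
move=> t0; rewrite /G fS_cons fS_nil /seg (ltW t0) /=.
have B0 := fS_ge0 b1 t.
case: (ltP t y) => _; simpl_arc; rewrite !ger0_norm; lra.
Qed.

Lemma P4a x (a1 : seq R) y (b1 : seq R) t : y <= x -> (forall c, c \in b1 -> c <= y) ->
  G (x :: a1) (y :: b1) 0 t = G a1 b1 0 t + seg y x t.
Proof.
move=> yx Hb; rewrite /G !fS_cons /seg.
have A0 := fS_ge0 a1 t; have B0 := fS_ge0 b1 t.
case: (ltP t y) => ty.
  rewrite (lt_le_trans ty yx) /=; simpl_arc; congr `|_|; ring.
rewrite (fS_zero (s := b1) (t := t)); last by move=> c /Hb cy; exact: le_trans cy ty.
case: (ltP t x) => tx; simpl_arc; rewrite ?ger0_norm; lra.
Qed.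

Lemma G_sym0 a b t : G b a 0 t = G a b 0 t.
Proof. by rewrite -{1}oppr0 G_sym. Qed.

Lemma P4b x (a1 : seq R) y (b1 : seq R) t : x <= y -> (forall c, c \in a1 -> c <= x) ->
  G (x :: a1) (y :: b1) 0 t = G a1 b1 0 t + seg x y t.
Proof.
move=> xy Ha; have := @P4a y b1 x a1 t xy Ha.
by rewrite (G_sym0 (x :: a1)) (G_sym0 a1).
Qed.


Lemma circ_le1 x y : circ_dist x y <= `|x - y|.
Proof. by rewrite /circ_dist ge_min lexx. Qed.

Lemma circ_le2 x y : circ_dist x y <= 2 * pi - `|x - y|.
Proof. by rewrite /circ_dist ge_min lexx orbT. Qed.

Lemma G_perm a a2 b b2 k t : perm_eq a a2 -> perm_eq b b2 ->
  G a b k t = G a2 b2 k t.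
Proof. by move=> pa pb; rewrite /G (fS_perm t pa) (fS_perm t pb). Qed.

Definition pos (s : seq R) := forall c, c \in s -> 0 < c < 2 * pi.

Lemma pos_sub (s1 s2 : seq R) : {subset s1 <= s2} -> pos s2 -> pos s1.
Proof. by move=> sub p c /sub /p. Qed.

Lemma dir2 n : forall a b, (size a + size b <= n)%N -> pos a -> pos b ->
  forall k, Mres a b k.
Proof.
elim: n => [|n IH] a b.
  by case: a => [|??] //; case: b => [|??] // _ _ _ k; exact: Mres_nil.
move=> hsz pa pb k.
wlog k0 : a b k hsz pa pb / (0 <= k)%R.
  move=> W; case: (leP 0 k) => kk; first exact: W.
  apply: Mres_sym; apply: W => //; first by rewrite addnC.
  by rewrite oppr_ge0 ltW.
case: b hsz pb => [|y b1] hsz pb.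
  case: a hsz pa => [|x a1] hsz pa; first exact: Mres_nil.
  have /andP[x0 x2] := pa x (mem_head _ _).
  apply: (step2 (x := x) (y := 0) (a1 := a1) (b1 := [::]) (k1 := k) (u := 0) (v := x)).
  - by rewrite /= (gt_eqF x0).
  - by rewrite /= eqxx.
  - by move=> t; rewrite /= in_itv /= => /andP[t0 t2]; exact: P1.
  - exact: lexx.
  - exact: ltW.
  - exact: ltW.
  - by apply: le_trans (circ_le1 _ _) _; rewrite !subr0 ger0_norm // ltW.
  apply: IH => //; last by apply: (pos_sub _ pa) => c hc; rewrite inE hc orbT.
have [yM yMb HyM] := max_in (s := y :: b1) isT.
have /andP[yM0 yM2] := pb yM yMb.
have pbr := perm_to_rem yMb.
have Hrem : forall c, c \in rem yM (y :: b1) -> c <= yM.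
  by move=> c /mem_rem; exact: HyM.
case: (eqVneq k 0) => [->|kn0]; last first.
  have kp : (0 < k)%R by rewrite lt_neqAle eq_sym kn0 k0.
  apply: (step2 (x := 0) (y := yM) (a1 := a) (b1 := rem yM (y :: b1)) (k1 := k - 1)
     (u := yM) (v := 2 * pi)).
  - by rewrite /= eqxx.
  - by rewrite /= (gt_eqF yM0).
  - move=> t; rewrite /= in_itv /= => /andP[t0 t2].
    by rewrite (G_perm _ _ (perm_refl a) pbr) P2.
  - exact: ltW.
  - exact: ltW.
  - exact: lexx.
  - by apply: le_trans (circ_le2 _ _) _; rewrite sub0r normrN ger0_norm // ltW.
  apply: IH => //; last by apply: (pos_sub _ pb) => c /mem_rem.
  by move: hsz; rewrite size_rem //= addnS.
case: a hsz pa => [|x a1] hsz pa.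
  have /andP[y0 y2] := pb y (mem_head _ _).
  apply: (step2 (x := 0) (y := y) (a1 := [::]) (b1 := b1) (k1 := 0) (u := 0) (v := y)).
  - by rewrite /= eqxx.
  - by rewrite /= (gt_eqF y0).
  - by move=> t; rewrite /= in_itv /= => /andP[t0 t2]; exact: P3.
  - exact: lexx.
  - exact: ltW.
  - exact: ltW.
  - by apply: le_trans (circ_le1 _ _) _; rewrite !subr0 sub0r normrN ger0_norm // ltW.
  apply: IH => //; last by apply: (pos_sub _ pb) => c hc; rewrite inE hc orbT.
have [xM xMa HxM] := max_in (s := x :: a1) isT.
have /andP[xM0 xM2] := pa xM xMa.
have par := perm_to_rem xMa.
have Hrema : forall c, c \in rem xM (x :: a1) -> c <= xM.
  by move=> c /mem_rem; exact: HxM.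
have IH' : Mres (rem xM (x :: a1)) (rem yM (y :: b1)) 0.
  apply: IH.
  - by move: hsz; rewrite !size_rem //= addSn addnS ltnS => /ltnW.
  - by apply: (pos_sub _ pa) => c /mem_rem.
  - by apply: (pos_sub _ pb) => c /mem_rem.
case: (leP yM xM) => yx.
  apply: (step2 (x := xM) (y := yM) (a1 := rem xM (x :: a1)) (b1 := rem yM (y :: b1))
     (k1 := 0) (u := yM) (v := xM)) => //.
  - by rewrite /= (gt_eqF xM0).
  - by rewrite /= (gt_eqF yM0).
  - by move=> t _; rewrite (G_perm _ _ par pbr) P4a.
  - exact: ltW.
  - exact: ltW.
  - by apply: le_trans (circ_le1 _ _) _; rewrite ger0_norm // subr_ge0.
apply: (step2 (x := xM) (y := yM) (a1 := rem xM (x :: a1)) (b1 := rem yM (y :: b1))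
   (k1 := 0) (u := xM) (v := yM)) => //.
- by rewrite /= (gt_eqF xM0).
- by rewrite /= (gt_eqF yM0).
- by move=> t _; rewrite (G_perm _ _ par pbr) P4b // ltW.
- exact: ltW.
- exact: ltW.
- exact: ltW.
- by apply: le_trans (circ_le1 _ _) _; rewrite distrC ger0_norm // subr_ge0 ltW.
Qed.

Lemma series_fin (u : nat -> R) N : (forall j, (N <= j)%N -> u j = 0) ->
  (\sum_(0 <= j <oo) (u j)%:E)%E = (\sum_(0 <= j < N) u j)%:E.
Proof.
move=> H; apply: lim_near_cst => //; near=> n.
have Nn : (N <= n)%N by near: n; exists N.
rewrite (big_cat_nat (leq0n N) Nn) /=.
have -> : (\sum_(N <= j < n) (u j)%:E = 0)%E.
  by rewrite big_nat_cond big1 // => j /andP[/andP[Nj _] _]; rewrite H.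
by rewrite adde0 sumEFin.
Unshelve. all: by end_near.
Qed.

Lemma uniq_card (A : set nat) m n : (A #= `I_m)%card -> (A #= `I_n)%card -> m = n.
Proof.
move=> h1 h2; apply/card_eq_II; rewrite card_eq_sym in h1.
exact: card_eq_trans h1 h2.
Qed.

Lemma set_eqb (f : nat -> R) x : [set j | f j = x] = [set j | f j == x].
Proof.
apply/funext => j; apply/propext; change (f j = x <-> f j == x).
by split => /eqP.
Qed.

Lemma count_iota_nth (a : seq R) x :
  count (fun j => nth 0 a j == x) (iota 0 (size a)) = count_mem x a.
Proof. by rewrite -[in RHS](mkseq_nth 0 a) /mkseq count_map. Qed.

Lemma count_iota_mkseq (f : nat -> R) N x :
  count (fun j => f j == x) (iota 0 N) = count_mem x (mkseq f N).
Proof. by rewrite /mkseq count_map. Qed.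


Lemma count_matches (a S : seq R) x : x != 0 -> matches a S ->
  count_mem x S = count_mem x a.
Proof.
move=> nx /permP h; rewrite -h count_filter; apply: eq_count => y /=.
by case: eqP => // ->; rewrite nx.
Qed.

Lemma pi2_gt0 : 0 < 2 * pi :> R.
Proof. by rewrite mulr_gt0 // pi_gt0. Qed.

Lemma enum_of_list (S a : seq R) : pos S -> matches a S ->
  enumeration S (fun j => nth 0 a j).
Proof.
move=> pS ma; split; [|split].
- move=> j; case: (ltnP j (size a)) => hj; last by rewrite nth_default // lexx pi2_gt0.
  case: (eqVneq (nth 0 a j) 0) => [->|nz]; first by rewrite lexx pi2_gt0.
  have : nth 0 a j \in S by rewrite -(perm_mem ma) mem_filter nz mem_nth.
  by move/pS => /andP[h1 h2]; rewrite (ltW h1) h2.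
- move=> fin; have [N HN] := fin_bound fin.
  have := HN (maxn N (size a)); rewrite /= nth_default ?leq_maxr //.
  by move=> /(_ erefl); rewrite ltnNge leq_maxl.
- move=> x nx.
  have HP : forall j, nth 0 a j == x -> (j < size a)%N.
    move=> j; case: (ltnP j (size a)) => // hj; rewrite nth_default //.
    by rewrite eq_sym (negbTE nx).
  by rewrite set_eqb (count_matches nx ma) -count_iota_nth; exact: card_bounded.
Qed.

Lemma bound_list (l : seq R) (P : R -> nat -> Prop) :
  (forall x, x \in l -> exists Nx, forall j, P x j -> (j < Nx)%N) ->
  exists N, forall x, x \in l -> forall j, P x j -> (j < N)%N.
Proof.
elim: l => [|y l IH] H; first by exists 0%N => x; rewrite in_nil.
have [Ny Hy] := H y (mem_head _ _).
have [Nl Hl] := IH (fun x hx => H x (mem_behead (s := y :: l) hx)).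
exists (maxn Ny Nl) => x; rewrite inE => /orP[/eqP->|hx] j Pj.
  by rewrite leq_max Hy.
by rewrite leq_max (Hl x hx j Pj) orbT.
Qed.

Lemma enum_bound (S : seq R) (s : nat -> R) : pos S -> enumeration S s ->
  exists N, forall j, (N <= j)%N -> s j = 0.
Proof.
move=> pS [_ [_ hc]].
have [N0 HN0] : exists N0, forall x, x \in S -> forall j, s j = x -> (j < N0)%N.
  apply: bound_list => x xS.
  have nx : x != 0 by have /andP[h _] := pS x xS; rewrite gt_eqF.
  have [Nx H] := fin_bound (A := [set j | s j = x]) (ex_intro (fun n => [set j | s j = x] #= `I_n)%card _ (hc x nx)).
  by exists Nx.
exists N0 => j Nj; case: (eqVneq (s j) 0) => // nz; exfalso.
have xS : s j \in S.
  rewrite -has_pred1 has_count lt0n; apply/negP => /eqP c0.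
  have := hc _ nz; rewrite c0 II0 card_eq0 => /eqP e.
  have : [set j' | s j' = s j] j by [].
  by rewrite e.
by have := HN0 _ xS j erefl; rewrite ltnNge Nj.
Qed.

Lemma matches_mkseq (S : seq R) (s : nat -> R) N : pos S -> enumeration S s ->
  (forall j, (N <= j)%N -> s j = 0) -> matches (mkseq s N) S.
Proof.
move=> pS [_ [_ hc]] HN; rewrite /matches /perm_eq; apply/allP => x _ /=; apply/eqP.
rewrite count_filter.
case: (eqVneq x 0) => [->|nx].
  rewrite (@eq_count _ _ pred0); last by move=> y /=; case: eqP.
  rewrite count_pred0; apply/esym/count_memPn; apply/negP => /pS.
  by rewrite ltxx.
rewrite (@eq_count _ _ (pred1 x)); last by move=> y /=; case: eqP => // ->.
rewrite -count_iota_mkseq.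
have HP : forall j, s j == x -> (j < N)%N.
  move=> j; case: (ltnP j N) => // hj; rewrite HN //.
  by rewrite eq_sym (negbTE nx).
have h2 := card_bounded HP; rewrite -set_eqb in h2.
exact: uniq_card h2 (hc x nx).
Qed.

Lemma fS_matches (a S : seq R) x : matches a S -> 0 < x -> fS a x = fS S x.
Proof.
move=> /permP h x0; rewrite /fS -h count_filter; congr (_%:R).
apply: eq_count => c /=; case: (ltP x c) => //= xc.
by rewrite gt_eqF // (lt_trans x0 xc).
Qed.

Lemma circ00 : circ_dist 0 0 = 0 :> R.
Proof. by rewrite /circ_dist subrr normr0 subr0 min_l // ltW // pi2_gt0. Qed.

Lemma rhoE (S T : seq R) (m n : int) :
  (\int[leb]_(x in D) (`|(fS S x + m%:~R) - (fS T x + n%:~R)|)%:E)%E = I S T (m - n).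
Proof.
by apply: eq_integral => x _; rewrite /G intrB; congr (_%:E); congr `|_|; ring.
Qed.

Lemma main_le1 (S T : seq R) : pos S -> pos T -> (rigged_dist S T <= rho1 S T)%E.
Proof.
move=> pS pT; apply: le_ereal_inf_tmp => e [m [n ->]]; rewrite rhoE.
have [a' [b' [sz ma mb c]]] := dir2 (leqnn _) pS pT (m - n).
apply: le_trans c; apply: ereal_inf_le; exists (cost a' b')%:E => //.
exists (fun j => nth 0 a' j), (fun j => nth 0 b' j); split.
- exact: enum_of_list.
- exact: enum_of_list.
rewrite (@series_fin _ (size a')) //.
move=> j hj; rewrite !nth_default ?circ00 // -sz //.
Qed.

Lemma main_le2 (S T : seq R) : pos S -> pos T -> (rho1 S T <= rigged_dist S T)%E.
Proof.
move=> pS pT; apply: le_ereal_inf_tmp => e [s [t [es et ->]]].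
have [N1 H1] := enum_bound pS es; have [N2 H2] := enum_bound pT et.
pose N := maxn N1 N2.
have HN : forall j, (N <= j)%N -> circ_dist (s j) (t j) = 0.
  move=> j; rewrite geq_max => /andP[h1 h2]; by rewrite H1 // H2 // circ00.
have ma := matches_mkseq pS es (fun j hj => H1 j (leq_trans (leq_maxl N1 N2) hj)).
have mb := matches_mkseq pT et (fun j hj => H2 j (leq_trans (leq_maxr N1 N2) hj)).
have sz : size (mkseq s N) = size (mkseq t N) by rewrite !size_mkseq.
have [es1 _] := es; have [et1 _] := et.
have ps : forall c, c \in mkseq s N -> 0 <= c < 2 * pi.
  by move=> c /mapP[j _ ->]; exact: es1.
have pt : forall c, c \in mkseq t N -> 0 <= c < 2 * pi.
  by move=> c /mapP[j _ ->]; exact: et1.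
have [k Hk] := dir1 sz ps pt.
rewrite (@series_fin _ N) //.
apply: ereal_inf_le; exists (I S T k).
  by exists k, 0; rewrite rhoE subr0.
rewrite (_ : I S T k = I (mkseq s N) (mkseq t N) k); last first.
  apply: eq_integral => x; rewrite inE /= in_itv /= => /andP[x0 _].
  by rewrite /G (fS_matches ma x0) (fS_matches mb x0).
apply: le_trans Hk _; rewrite lee_fin /cost size_mkseq le_eqVlt; apply/orP; left.
by apply/eqP; apply: eq_big_nat => j /andP[_ hj]; rewrite !nth_mkseq.
Qed.

End Aux.

Theorem mainTheorem13 (R : realType) (S T : seq R) :
  finrank_rigged S -> finrank_rigged T ->
  rigged_dist S T = rho1 S T.
Proof.
move=> pS pT; apply/eqP; rewrite eq_le.
by rewrite (main_le1 pS pT) (main_le2 pS pT).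
Qed.
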